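(* Assume the standing setup, let $(\hat\sigma,\varphi)$ be fine and let $\nu,\lambda$ be the fixed conformal measure. Then for every finite set $D\subset E$ and every integer $n\ge0$ there exists $\beta=\beta_{D,n}>0$ such that $$\nu_x([\omega]_x)\ge\beta$$ for every integer $0\le k\le n$, every word $\omega\in D_x^k$ and $m$-a.e. $x\in X$.
   Context: Standing setup. $(X,\mathcal F,m)$ is a complete probability space and $\theta:X\to X$ an invertible measurable $m$-preserving map. $E=\mathbb N$, and $x\mapsto A(x)=(A_{ij}(x))_{i,j\in E}$ is a measurable map into $\{0,1\}$-matrices. $E_x^n$ is the set of words $\omega_0\cdots\omega_n\in E^{n+1}$ with $A_{\omega_i\omega_{i+1}}(\theta^i(x))=1$ for $0\le i\le n-1$; for $D\subset E$, $D_x^n$ is the set of words in $E_x^n$ with all letters in $D$; $E_x^\infty$ is the set of $\omega\in E^{\mathbb N}$ with $A_{\omega_i\omega_{i+1}}(\theta^i(x))=1$ for all $i$. For $\omega\in E_x^n$, $[\omega]_x=\{\tau\in E_x^\infty:\tau_0\cdots\tau_n=\omega\}$; $[F]_x=\{\tau\in E_x^\infty:\tau_0\in F\}$, $[0,\dots,l]_x=[\{0,\dots,l\}]_x$; complements in $E_x^\infty$. Metric $d(\omega,\tau)=e^{-\min\{n:\omega_n\ne\tau_n\}}$. $\sigma_x:E_x^\infty\to E_{\theta(x)}^\infty$ the shift, $\Omega=\bigcup_x\{x\}\times E_x^\infty$, $\hat\sigma(x,\omega)=(\theta(x),\sigma_x\omega)$, $\varphi_x=\varphi(x,\cdot)$.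 $\hat\sigma$ is topologically mixing: for all $a,b\in E$ there is $N$ such that for all $n\ge N$ and all $x$ there is a word $\omega$ of length $n+1$ with $a\omega b\in E_x^{n+2}$. Fix $\alpha>0$; $v_\alpha(g)=\sup\{|g(\tau)-g(\omega)|/d(\tau,\omega)^\alpha:\tau\ne\omega,\tau_0=\omega_0\}$. Summable potential: measurable $\varphi:\Omega\to\mathbb R$, $\varphi_x$ continuous, $\operatorname{ess\,sup}_xv_\alpha(\varphi_x)<\infty$, for each $e$ constants $0<c_e<C_e$ with $c_e\le e^{\varphi_x}\le C_e$ on $[e]_x$ a.e., and $\lim_{l\to\infty}\operatorname{ess\,sup}_x\sup\mathcal L_x(1_{[0,\dots,l]_x^c})=0$, where $\mathcal L_xg(\omega)=\sum_{e:\,A_{e\omega_0}(x)=1}g(e\omega)e^{\varphi_x(e\omega)}$, $\omega\in E_{\theta(x)}^\infty$. (A): for each $e$ some $M_e>0$ with $M_e^{-1}\le\mathcal L_x1$ on $[e]_{\theta(x)}$ a.e.; (B): $\lim_{e\to\infty}\operatorname{ess\,sup}_x\sup_{[e]_{\theta(x)}}\mathcal L_x1=0$; (C): there are $0<\kappa<1/4$ and finite $F\subset E$ with $\sup\mathcal L_x(1_{E_x^\infty\setminus[F]_x})\le\kappa\inf_{[F]_{\theta(x)}}\mathcal L_x1$ a.e. Fine: $\varphi$ summable and (A),(B),(C). Random measures: probability measures on $\Omega$ with marginal $m$ and disintegrations $\nu_x$ (probabilities on $E_x^\infty$). Fixed conformal measure: a random measure $\nu$ with a measurable $\lambda:X\to(0,\infty)$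 such that $\int\mathcal L_xg\,d\nu_{\theta(x)}=\lambda_x\int g\,d\nu_x$ for all bounded continuous $g$ on $E_x^\infty$ and a.e. $x$, with $\operatorname{ess\,sup}|\log\lambda|<\infty$ and $\nu_x([F]_x)\ge1/2$ for a.e. $x$, $F$ being the set from (C) (the conformal measure constructed in the paper has these properties). *)

(* Defs.v *)
From HB Require Import structures.
From mathcomp Require Import all_boot all_order all_algebra.
From mathcomp Require Import all_classical all_reals all_analysis.
From mathcomp Require Import measurable_realfun.
Set Implicit Arguments. Unset Strict Implicit. Unset Printing Implicit Defensive.
Import Order.TTheory GRing.Theory Num.Theory.
Import numFieldNormedType.Exports.
Local Open Scope classical_set_scope.
Local Open Scope ring_scope.

(* The space of one-sided sequences E^N with E = nat, equipped with the
   sigma-algebra generated by one-coordinate cylinders (= Borel sigma-algebra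
   of the metric d below). *)
Definition cyl_gen : set (set (nat -> nat)) :=
  fun S => exists i e, S = [set t | t i = e].
Definition Seq := g_sigma_algebraType cyl_gen.

Section Defs.
Context {d : measure_display} {X : measurableType d} {R : realType}.
Variables (theta : X -> X) (A : X -> nat -> nat -> bool).

Definition Einf (x : X) : set Seq :=
  [set w | forall i, A (iter i theta x) (w i) (w i.+1)].

Definition Ewords (x : X) (n : nat) : set (seq nat) :=
  [set w | size w = n.+1 /\
     forall i, (i < n)%N -> A (iter i theta x) (nth 0%N w i) (nth 0%N w i.+1)].

Definition Dwords (D : seq nat) (x : X) (n : nat) : set (seq nat) :=
  [set w | Ewords x n w /\ all (fun e => e \in D) w].

Definition cyl (x : X) (w : seq nat) : set Seq :=
  [set t | Einf x t /\ forall i, (i < size w)%N -> t i = nth 0%N w i].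

Definition econs (e : nat) (w : nat -> nat) : nat -> nat :=
  fun n => if n is n'.+1 then w n' else e.

Definition seqdist (w t : nat -> nat) : R :=
  match pselect (exists n, w n != t n) with
  | left h => expR (- ((ex_minn h)%:R))
  | right _ => 0
  end.

Definition cont_on (S : set Seq) (g : Seq -> R) : Prop :=
  forall t, S t -> forall eps : R, 0 < eps -> exists2 del : R, 0 < del &
    forall t', S t' -> seqdist t t' < del -> `|g t' - g t| < eps.

Definition bounded_on (S : set Seq) (g : Seq -> R) : Prop :=
  exists M : R, forall t, S t -> `|g t| <= M.

Variable phi : X -> Seq -> R.

Definition Lpos (x : X) (g : Seq -> R) (w : Seq) : \bar R :=
  (\sum_(e <oo) (if A x e (w 0%N)
                 then (g (econs e w) * expR (phi x (econs e w)))%:E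
                 else 0%E))%E.

Definition Lop (x : X) (g : Seq -> R) (w : Seq) : R :=
  limn (series (fun e : nat => if A x e (w 0%N)
                 then g (econs e w) * expR (phi x (econs e w)) else 0)).

End Defs.

(* Main.v *)
Require Import Defs.
From HB Require Import structures.
From mathcomp Require Import all_boot all_order all_algebra.
From mathcomp Require Import all_classical all_reals all_analysis.
From mathcomp Require Import measurable_realfun.
From mathcomp Require Import zify ring lra.
Import Order.TTheory GRing.Theory Num.Theory.
Import numFieldNormedType.Exports.
Local Open Scope classical_set_scope.
Local Open Scope ring_scope.
Section nm.
Local Open Scope ereal_scope.
Context d (T : measurableType d) (R : realType).
Variable mu : {measure set T -> \bar R}.
Variables (D : set T) (mD : measurable D) (f1 f2 : T -> \bar R).
Hypothesis f10 : forall x, D x -> 0 <= f1 x.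
Hypothesis mf1 : measurable_fun D f1.
Import HBNNSimple.

Lemma ge0_le_integral_nm : (forall x, D x -> f1 x <= f2 x) ->
  \int[mu]_(x in D) f1 x <= \int[mu]_(x in D) f2 x.
Proof.
move=> f12; rewrite !(integral_mkcond D).
set h1 := f1 \_ D; set h2 := f2 \_ D.
have h10 x : 0 <= h1 x by apply: erestrict_ge0.
have h20 x : 0 <= h2 x.
  by apply: erestrict_ge0 => // t /[dup] Dt /f12; apply: le_trans; exact: f10.
have mh1 : measurable_fun setT h1 by exact/(measurable_restrictT _ _).1.
have h12 x : h1 x <= h2 x by apply: lee_restrict.
pose g1 := nnsfun_approx measurableT mh1.
rewrite (@nd_ge0_integral_lim _ _ _ _ _ g1)//; last 2 first.
  by move=> x m n mn; exact/lefP/nd_nnsfun_approx.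
  by move=> x; exact: cvg_nnsfun_approx.
apply: lime_le.
  by apply: is_cvg_sintegral => // t m n mn; exact/lefP/nd_nnsfun_approx.
near=> n; rewrite ge0_integralTE//; apply: ereal_sup_ubound => /=.
exists (g1 n) => // t; rewrite (le_trans _ (h12 _))//.
have := leey (h1 t); rewrite le_eqVlt => /predU1P[->|ftoo].
  by rewrite leey.
have h1tfin : h1 t \is a fin_num.
  by rewrite fin_numE gt_eqF/= ?lt_eqF// (lt_le_trans _ (h10 t)).
have /= := @cvg_nnsfun_approx _ _ _ _ measurableT _ mh1 (fun x _ => h10 x) t Logic.I.
rewrite -(fineK h1tfin) => /fine_cvgP[ft_near].
set u_ := (X in X --> _) => u_h1.
have <- : lim u_ = fine (h1 t) by exact/cvg_lim.
rewrite lee_fin; apply: nondecreasing_cvgn_le.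
  by move=> // a b ab; rewrite /u_ /=; exact/lefP/nd_nnsfun_approx.
by apply/cvg_ex; eexists; exact: u_h1.
Unshelve. all: by end_near. Qed.
End nm.

Lemma step_e (R : realType) (a b : \bar R) (l L c r : R) :
  b \is a fin_num -> (0 <= b)%E -> 0 < l -> l <= L -> 0 <= r -> r * L <= c ->
  (c%:E * b <= l%:E * a)%E -> (r%:E * b <= a)%E.
Proof.
move: b => [b| |] // _; rewrite lee_fin => b0 l0 lL r0 rc.
case: a => [a| |].
- rewrite -!EFinM !lee_fin => H.
  have H1 : r * b * l <= l * a.
    apply: le_trans H; apply: le_trans (ler_wpM2r b0 rc).
    rewrite -mulrA (mulrC b) mulrA; apply: ler_wpM2r => //.
    exact: ler_wpM2l.
  rewrite -(ler_pM2r l0); by rewrite (mulrC a).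
- by move=> _; apply: leey.
- rewrite mulrNy gtr0_sg // mul1e -EFinM leeNy_eq => /eqP //.
Qed.
Arguments step_e {R a b l L c r}.

Section Gen.
Context {d : measure_display} {X : measurableType d} {R : realType}.
Variables (theta : X -> X) (A : X -> nat -> nat -> bool).

Lemma meas_coord (i e : nat) : measurable ([set t : Seq | t i = e]).
Proof. apply: sub_sigma_algebra; by exists i, e. Qed.

Lemma meas_Einf x : measurable (Einf theta A x).
Proof.
have -> : Einf theta A x = \bigcap_i \bigcup_p \bigcup_q
  (if A (iter i theta x) p q then [set t : Seq | t i = p] `&` [set t | t i.+1 = q]
   else set0).
  apply/seteqP; split=> t /=.
    move=> H i _; exists (t i) => //; exists (t i.+1) => //; by rewrite H.
  move=> H i; have [p _ [q _]] := H i Logic.I.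
  by case: ifP => // Ap [/= -> ->].
apply: bigcapT_measurable => i; apply: bigcupT_measurable => p.
apply: bigcupT_measurable => q; case: ifP => _ //.
by apply: measurableI; apply: meas_coord.
Qed.

Lemma meas_cyl x w : measurable (cyl theta A x w).
Proof.
have -> : cyl theta A x w = Einf theta A x `&` \bigcap_i
  (if (i < size w)%N then [set t : Seq | t i = nth 0%N w i] else setT).
  apply/seteqP; split=> t /=.
    by move=> [H1 H2]; split=> // i _; case: ifP => // /H2.
  move=> [H1 H2]; split=> // i Hi; by have := H2 i Logic.I; rewrite Hi.
apply: measurableI; first exact: meas_Einf.
by apply: bigcapT_measurable => i; case: ifP => _ //; apply: meas_coord.
Qed.

Lemma cyl_Einf x w : cyl theta A x w `<=` Einf theta A x.
Proof. by move=> t []. Qed.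

Lemma cyl_cat x w v : cyl theta A x (w ++ v) `<=` cyl theta A x w.
Proof.
move=> t [H1 H2]; split=> // i Hi.
rewrite H2 ?nth_cat ?Hi // size_cat; exact: ltn_addr.
Qed.

Lemma econs_Einf x a w : Einf theta A (theta x) w -> A x a (w 0%N) ->
  Einf theta A x (econs a w).
Proof.
move=> Hw Ha [|i] //; rewrite iterSr; exact: Hw.
Qed.

Lemma Ewords_cons x n a u : Ewords theta A x n.+1 (a :: u) ->
  A x a (nth 0%N u 0) /\ Ewords theta A (theta x) n u.
Proof.
move=> [/= [Hs] H]; split; first exact: (H 0%N).
split=> // i Hi; rewrite -iterSr; exact: (H i.+1).
Qed.

Lemma nth_cat_last (w v : seq nat) k j : size w = k.+1 ->
  nth 0%N (w ++ v) (k + j) = nth 0%N (nth 0%N w k :: v) j.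
Proof.
move=> Hs; case: j => [|j]; first by rewrite addn0 nth_cat Hs ltnSn.
rewrite nth_cat Hs ltnNge addnS ltnS leq_addr /=; congr nth; lia.
Qed.

Lemma Ewords_cat x k m w v : Ewords theta A x k w ->
  Ewords theta A (iter k theta x) m (nth 0%N w k :: v) ->
  Ewords theta A x (k + m) (w ++ v).
Proof.
move=> [Hw1 Hw2] [/= [Hv1] Hv2]; split; first by rewrite size_cat Hw1 Hv1 addSn.
move=> i Hi; have [ik|ki] := ltnP i k.
  rewrite !nth_cat Hw1 ltnS (ltnW ik) ltnS ik; exact: Hw2.
have -> : i = (k + (i - k))%N by lia.
rewrite !nth_cat_last // -addnS nth_cat_last // addnC iterD.
apply: Hv2; by rewrite ltn_subLR.
Qed.

Lemma Ewords_size x n w : Ewords theta A x n w -> size w = n.+1.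
Proof. by case. Qed.
Lemma seqdist_agree (t t' : Seq) (K : nat) :
  @seqdist R t t' < expR (- K%:R) -> forall i, (i <= K)%N -> t i = t' i.
Proof.
rewrite /seqdist; case: pselect => [h|nh]; last first.
  move=> _ i _; apply/eqP; apply/negPn/negP => Hi; apply: nh; by exists i.
case: ex_minnP => m Hm Hmin; rewrite ltr_expR ltrN2 ltr_nat => Km i iK.
apply/eqP; apply/negPn/negP => Hi.
have := Hmin i Hi; rewrite leqNgt => /negP; apply; exact: leq_ltn_trans Km.
Qed.

Lemma cont_indic_cyl x w :
  cont_on (Einf theta A x) (\1_(cyl theta A x w) : Seq -> R).
Proof.
move=> t Ht eps eps0; exists (expR (- (size w)%:R)); first exact: expR_gt0.
move=> t' Ht' Hd.
have ag := @seqdist_agree t t' (size w) Hd.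
suff -> : (\1_(cyl theta A x w) t' : R) = \1_(cyl theta A x w) t.
  by rewrite subrr normr0.
have E : cyl theta A x w t' <-> cyl theta A x w t.
  split=> -[H1 H2]; split => // i Hi.
    by rewrite ag ?(ltnW Hi) // H2.
  by rewrite -ag ?(ltnW Hi) // H2.
rewrite /indic; have [Hc|Hc] := pselect (cyl theta A x w t).
  by rewrite (mem_set Hc) (mem_set (proj2 E Hc)).
rewrite (memNset Hc) memNset //; by move/E.
Qed.
Lemma lim_series_single (f : nat -> R) a :
  (forall e, e != a -> f e = 0) -> limn (series f) = f a.
Proof.
move=> Hf; apply: cvg_lim => //; apply: cvg_near_cst.
near=> n; rewrite /series /=.
rewrite (bigD1_seq a) ?mem_iota ?iota_uniq //=; last first.
  rewrite subn0; near: n; exists a.+1 => // n /= Hn.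
rewrite big1 ?addr0 // => i; exact: Hf.
Unshelve. all: by end_near. Qed.

Variable phi : X -> Seq -> R.

Lemma Lop_cyl x a u w :
  Lop A phi x (\1_(cyl theta A x (a :: u)) : Seq -> R) w =
  (if A x a (w 0%N) then (\1_(cyl theta A x (a :: u)) (econs a w) : R)
     * expR (phi x (econs a w)) else 0).
Proof.
rewrite /Lop (@lim_series_single _ a) // => e Hea.
case: ifP => // _; rewrite /indic memNset ?mul0r //.
move=> [_ H]; have := H 0%N isT => /= Hea'; by rewrite Hea' eqxx in Hea.
Qed.

Lemma Lop_lb x a u w (c : R) : (0 <= c) ->
  (forall t, Einf theta A x t -> t 0%N = a -> c <= expR (phi x t)) ->
  (0 < size u)%N -> A x a (nth 0%N u 0) -> Einf theta A (theta x) w ->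
  c * (\1_(cyl theta A (theta x) u) w : R) <=
  Lop A phi x (\1_(cyl theta A x (a :: u)) : Seq -> R) w.
Proof.
move=> c0 Hc su Aa Hw; rewrite Lop_cyl.
have [Hcw|Hcw] := pselect (cyl theta A (theta x) u w); last first.
  have -> : (\1_(cyl theta A (theta x) u) w : R) = 0 by rewrite /indic (memNset Hcw).
  by rewrite mulr0; case: ifP => // _; apply: mulr_ge0 => //; apply: ltW; apply: expR_gt0.
have w0 : w 0%N = nth 0%N u 0 by case: Hcw => _ H; apply: H.
have Aw : A x a (w 0%N) by rewrite w0.
have Hc2 : cyl theta A x (a :: u) (econs a w).
  split; first exact: econs_Einf.
  case => [|i] //= Hi; case: Hcw => _ H; exact: H.
rewrite Aw /indic (mem_set Hcw) (mem_set Hc2) mulr1 mul1r.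
apply: Hc => //; exact: econs_Einf.
Qed.

Lemma K1 (nu : X -> probability Seq R) (lam : X -> R) x a u (c : R) :
  (forall g : Seq -> R,
      bounded_on (Einf theta A x) g -> cont_on (Einf theta A x) g ->
      (\int[nu (theta x)]_(w in Einf theta A (theta x))
          (Lop A phi x g w)%:E
        = (lam x)%:E * \int[nu x]_(w in Einf theta A x) (g w)%:E)%E) ->
  0 <= c ->
  (forall t, Einf theta A x t -> t 0%N = a -> c <= expR (phi x t)) ->
  (0 < size u)%N -> A x a (nth 0%N u 0) ->
  (c%:E * nu (theta x) (cyl theta A (theta x) u) <=
   (lam x)%:E * nu x (cyl theta A x (a :: u)))%E.
Proof.
move=> Hconf c0 Hc su Aa.
have -> : nu x (cyl theta A x (a :: u)) =
   (\int[nu x]_(w in Einf theta A x) ((\1_(cyl theta A x (a :: u)) : Seq -> R) w)%:E)%E.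
  rewrite integral_indic; try exact: meas_cyl; try exact: meas_Einf.
  by rewrite setIidl //; apply: cyl_Einf.
have Hb : bounded_on (Einf theta A x) (\1_(cyl theta A x (a :: u)) : Seq -> R).
  by exists 1 => t _; rewrite /indic; case: (_ \in _); rewrite ?normr1 ?normr0.
have H := Hconf _ Hb (cont_indic_cyl x (a :: u)).
rewrite -H.
have -> : nu (theta x) (cyl theta A (theta x) u) =
   (\int[nu (theta x)]_(w in Einf theta A (theta x))
      ((\1_(cyl theta A (theta x) u) : Seq -> R) w)%:E)%E.
  rewrite integral_indic; try exact: meas_cyl; try exact: meas_Einf.
  by rewrite setIidl //; apply: cyl_Einf.
rewrite -ge0_integralZl_EFin //; last 2 first.
- exact: meas_Einf.
- apply/measurable_EFinP; apply: measurable_indic; exact: meas_cyl.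
apply: ge0_le_integral_nm.
- exact: meas_Einf.
- by move=> t _; rewrite -EFinM lee_fin; apply: mulr_ge0 => //; rewrite /indic; case: (_ \in _).
- apply: measurable_funeM.
  apply/measurable_EFinP; apply: measurable_indic; exact: meas_cyl.
move=> t Ht; rewrite -EFinM lee_fin; exact: Lop_lb.
Qed.
Arguments K1 {nu lam x a u c}.


Lemma prob_fin (P : probability Seq R) (S : set Seq) : measurable S ->
  P S \is a fin_num.
Proof.
move=> mS; rewrite ge0_fin_numE ?measure_ge0 //.
exact: (le_lt_trans (probability_le1 _ mS) (ltry _)).
Qed.
Arguments prob_fin {P S}.

Definition GoodC (nu : X -> probability Seq R) (lam : X -> R) (L : R)
   (c : nat -> R) (y : X) :=
  [/\ (forall g : Seq -> R,
      bounded_on (Einf theta A y) g -> cont_on (Einf theta A y) g ->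
      (\int[nu (theta y)]_(w in Einf theta A (theta y))
          (Lop A phi y g w)%:E
        = (lam y)%:E * \int[nu y]_(w in Einf theta A y) (g w)%:E)%E),
   (forall e t, Einf theta A y t -> t 0%N = e -> c e <= expR (phi y t)),
   0 < lam y & lam y <= L].

Lemma chain (nu : X -> probability Seq R) (lam : X -> R) (L r : R) (B : nat)
   (c : nat -> R) : 0 <= r -> 0 <= L ->
  (forall e, (e < B)%N -> r * L <= c e) ->
  forall u a x, (forall j, GoodC nu lam L c (iter j theta x)) ->
  Ewords theta A x (size u) (a :: u) -> all (fun e => e < B)%N (a :: u) ->
  ((r ^+ size u)%:E * nu (iter (size u) theta x)
       (cyl theta A (iter (size u) theta x) [:: last a u])
    <= nu x (cyl theta A x (a :: u)))%E.
Proof.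
move=> r0 L0 HB; elim=> [|b u IH] a x HG Hw Hall.
  by rewrite expr0 mul1e.
move/Ewords_cons: Hw => [Aab Hw'].
move: Hall => /= /andP [aB Hall].
have HG' : forall j, GoodC nu lam L c (iter j theta (theta x)).
  by move=> j; rewrite -iterSr.
have := IH b (theta x) HG' Hw' Hall.
rewrite /= -iterSr => H1.
have [Hconf Hc l0 lL] := HG 0%N.
have cB := HB a aB.
have c0 : 0 <= c a by apply: le_trans cB; apply: mulr_ge0.
have H2 := K1 Hconf c0 (Hc a) (isT : (0 < size (b :: u))%N) Aab.
have H3 := step_e (prob_fin (meas_cyl _ _)) (measure_ge0 _ _) l0 lL r0 cB H2.
apply: le_trans H3; rewrite exprS EFinM -muleA.
apply: lee_wpmul2l; first by rewrite lee_fin.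
exact: H1.
Qed.
End Gen.
Lemma bigU_mem {T : Type} (s : seq nat) (S : nat -> set T) t :
  (\big[setU/set0]_(j <- s) S j) t -> exists2 j, j \in s & S j t.
Proof.
elim: s => [|i s IH]; first by rewrite big_nil.
rewrite big_cons => -[H|H]; first by exists i => //; rewrite mem_head.
by have [j js Sj] := IH H; exists j => //; rewrite in_cons js orbT.
Qed.

Lemma sum_disj d (T : measurableType d) (R : realType)
  (mu : {measure set T -> \bar R}) (s : seq nat) (S : nat -> set T) :
  uniq s -> (forall i, measurable (S i)) ->
  (forall i j, i != j -> S i `&` S j = set0) ->
  (\sum_(i <- s) mu (S i) = mu (\big[setU/set0]_(i <- s) S i))%E.
Proof.
move=> + mS dS; elim: s => [|i s IH]; first by rewrite !big_nil measure0.
move=> /= /andP [ns us]; rewrite !big_cons IH // measureU //.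
- by apply: bigsetU_measurable.
- apply/seteqP; split => // t [Hi HU]; have [j js Sj] := bigU_mem _ _ _ HU.
  have ij : i != j by apply/eqP => ij; rewrite ij js in ns.
  by rewrite -(dS _ _ ij).
Qed.
Lemma ae_theta d (X : measurableType d) (R : realType) (m : {measure set X -> \bar R})
  (theta : X -> X) : measurable_fun setT theta ->
  (forall B : set X, measurable B -> m (theta @^-1` B) = m B) ->
  forall P : X -> Prop, (\forall x \ae m, P x) -> \forall x \ae m, P (theta x).
Proof.
move=> tm tp P [N [mN N0 HN]]; exists (theta @^-1` N); split.
- by have := tm measurableT _ mN; rewrite setTI.
- by rewrite tp.
- by move=> t /= nP; apply: HN.
Qed.

Lemma ae_iter d (X : measurableType d) (R : realType) (m : {measure set X -> \bar R})
  (theta : X -> X) : measurable_fun setT theta ->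
  (forall B : set X, measurable B -> m (theta @^-1` B) = m B) ->
  forall P : X -> Prop, (\forall x \ae m, P x) ->
  \forall x \ae m, forall j, P (iter j theta x).
Proof.
move=> tm tp P HP; apply: ae_foralln => j; elim: j => [|j IH] //.
have := @ae_theta _ _ _ _ _ tm tp (fun y => P (iter j theta y)) IH; apply: filterS => x; by rewrite iterSr.
Qed.
Fixpoint Bseq (e0 : nat -> nat) (B0 : nat) (j : nat) : nat :=
  match j with 0 => B0 | j'.+1 => maxn (Bseq e0 B0 j') (\max_(b < Bseq e0 B0 j') e0 b) end.

Lemma Bseq_mono e0 B0 j j' : (j <= j')%N -> (Bseq e0 B0 j <= Bseq e0 B0 j')%N.
Proof.
move=> /subnKC <-; elim: (j' - j)%N => [|i IH]; first by rewrite addn0.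
rewrite addnS /=; apply: leq_trans IH (leq_maxl _ _).
Qed.

Lemma Bseq_step e0 B0 j b : (b < Bseq e0 B0 j)%N -> (e0 b <= Bseq e0 B0 j.+1)%N.
Proof.
move=> Hb /=; apply: leq_trans (leq_maxr _ _).
exact: (@leq_bigmax _ (fun i : 'I_(Bseq e0 B0 j) => e0 i) (Ordinal Hb)).
Qed.

Lemma bigU_in {T : Type} (s : seq nat) (S : nat -> set T) j t :
  j \in s -> S j t -> (\big[setU/set0]_(i <- s) S i) t.
Proof.
elim: s => [|i s IH] //; rewrite in_cons big_cons => /orP [/eqP <-|js] Hj.
  by left.
by right; apply: IH.
Qed.

Fixpoint oseq {X : Type} (sf : X -> nat -> nat) (theta : X -> X) (y : X) (e : nat)
  (i : nat) : nat :=
  match i with 0 => e | i'.+1 => sf (iter i' theta y) (oseq sf theta y e i') end.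

Section Gen2.
Context {d : measure_display} {X : measurableType d} {R : realType}.
Variables (theta : X -> X) (A : X -> nat -> nat -> bool).

Lemma oseq_Einf (sf : X -> nat -> nat) y e : (forall z a, A z a (sf z a)) ->
  Einf theta A y (oseq sf theta y e : Seq).
Proof. by move=> Hsf i /=; apply: Hsf. Qed.

Lemma path_bound e0 B0 y m v :
  (forall j a e, A (iter j theta y) a e -> (e < e0 a)%N) ->
  Ewords theta A y m v -> (nth 0%N v 0 < Bseq e0 B0 0)%N ->
  forall j, (j <= m)%N -> (nth 0%N v j < Bseq e0 B0 j)%N.
Proof.
move=> Hb [_ Hv] H0; elim=> [|j IH] // jm.
have := Hb _ _ _ (Hv j jm) => H1.
apply: leq_trans H1 _; apply: Bseq_step; apply: IH; exact: ltnW.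
Qed.

Variable phi : X -> Seq -> R.

Lemma Lpos_ge y a w :
  ((if A y a (w 0%N) then ((1 * expR (phi y (econs a w)))%R)%:E else 0%E)
   <= Lpos A phi y (fun _ : Seq => 1%R) w)%E.
Proof.
rewrite /Lpos; apply: le_trans (nneseries_lim_ge (a.+1) _).
- rewrite big_nat_recr //=; apply: leeDr; apply: sume_ge0 => i _.
  case: ifP => // _; rewrite lee_fin mul1r; apply: ltW; apply: expR_gt0.
- move=> i _ _; case: ifP => // _; rewrite lee_fin mul1r; apply: ltW; apply: expR_gt0.
Qed.
End Gen2.
Fixpoint cminf {R : realType} (c : nat -> R) (B : nat) : R :=
  match B with 0 => 1 | B'.+1 => Num.min (cminf c B') (c B') end.

Lemma cminf_gt0 {R : realType} (c : nat -> R) B :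
  (forall e, 0 < c e) -> 0 < cminf c B.
Proof. move=> Hc; elim: B => [|B IH] //=; by rewrite lt_min IH Hc. Qed.

Lemma cminf_le1 {R : realType} (c : nat -> R) B : cminf c B <= 1.
Proof. elim: B => [|B IH] //=; by rewrite ge_min IH. Qed.

Lemma cminf_le {R : realType} (c : nat -> R) B e : (e < B)%N -> cminf c B <= c e.
Proof.
elim: B => [|B IH] //= eB; rewrite ge_min; move: eB; rewrite ltnS leq_eqVlt.
case/orP => [/eqP ->|/IH ->] //; by rewrite lexx orbT.
Qed.
Theorem lemma4p1
  (d : measure_display) (X : measurableType d) (R : realType)
  (m : probability X R) (theta thetainv : X -> X)
  (A : X -> nat -> nat -> bool) (phi : X -> Seq -> R) (alpha : R)
  (F : seq nat) (kappa : R) (nu : X -> probability Seq R) (lam : X -> R)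
  (* (X, F, m) complete probability space *)
  (m_complete : forall N : set X, measurable N -> m N = 0%E ->
     forall B, B `<=` N -> measurable B)
  (* theta invertible, bimeasurable, m-preserving *)
  (theta_meas : measurable_fun setT theta)
  (thetainv_meas : measurable_fun setT thetainv)
  (thetaK : cancel theta thetainv) (thetainvK : cancel thetainv theta)
  (theta_pres : forall B : set X, measurable B -> m (theta @^-1` B) = m B)
  (* x |-> A(x) measurable *)
  (A_meas : forall i j, measurable [set x | A x i j])
  (* topological mixing *)
  (mixing : forall a b : nat, exists N : nat, forall n : nat, (N <= n)%N ->
     forall x : X, exists w : seq nat, size w = n.+1 /\
       Ewords theta A x n.+2 (a :: w ++ [:: b]))
  (* summable potential *)
  (alpha_gt0 : 0 < alpha)
  (phi_meas : measurable_fun [set p : X * Seq | Einf theta A p.1 p.2]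
                 (fun p => phi p.1 p.2))
  (phi_cont : forall x, cont_on (Einf theta A x) (phi x))
  (phi_var : exists K : R, {ae m, forall x, forall t w : Seq,
      Einf theta A x t -> Einf theta A x w -> t <> w -> t 0%N = w 0%N ->
      `|phi x t - phi x w| <= K * (@seqdist R t w) `^ alpha})
  (phi_bnd : forall e : nat, exists c C : R, 0 < c < C /\
      {ae m, forall x, forall t, Einf theta A x t -> t 0%N = e ->
         c <= expR (phi x t) <= C})
  (phi_summ : forall eps : R, 0 < eps -> exists l0 : nat, forall l : nat,
      (l0 <= l)%N -> {ae m, forall x, forall w, Einf theta A (theta x) w ->
        (Lpos A phi x (fun t : Seq => if (l < t 0%N)%N then 1%R else 0%R) w
          <= eps%:E)%E})
  (* (A) *)
  (condA : forall e : nat, exists2 M : R, 0 < M &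
      {ae m, forall x, forall w, Einf theta A (theta x) w -> w 0%N = e ->
        ((M^-1)%:E <= Lpos A phi x (fun _ => 1%R) w)%E})
  (* (B) *)
  (condB : forall eps : R, 0 < eps -> exists e0 : nat, forall e : nat,
      (e0 <= e)%N -> {ae m, forall x, forall w, Einf theta A (theta x) w ->
        w 0%N = e -> (Lpos A phi x (fun _ => 1%R) w <= eps%:E)%E})
  (* (C) *)
  (kappa_bnd : 0 < kappa < 4^-1)
  (condC : {ae m, forall x, forall w w', Einf theta A (theta x) w ->
      Einf theta A (theta x) w' -> w' 0%N \in F ->
      (Lpos A phi x (fun t : Seq => if t 0%N \in F then 0%R else 1%R) w
        <= kappa%:E * Lpos A phi x (fun _ => 1%R) w')%E})
  (* nu is a random measure with disintegrations nu_x on E_x^infty *)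
  (nu_supp : forall x, nu x (Einf theta A x) = 1%E)
  (nu_meas : forall B : set Seq, measurable B ->
      measurable_fun [set: X] (fun x : X => nu x B))
  (* lambda *)
  (lam_gt0 : forall x, 0 < lam x)
  (lam_meas : measurable_fun setT lam)
  (lam_bnd : exists K : R, {ae m, forall x, `|ln (lam x)| <= K})
  (* conformality *)
  (conformal : {ae m, forall x, forall g : Seq -> R,
      bounded_on (Einf theta A x) g -> cont_on (Einf theta A x) g ->
      (\int[nu (theta x)]_(w in Einf theta A (theta x))
          (Lop A phi x g w)%:E
        = (lam x)%:E * \int[nu x]_(w in Einf theta A x) (g w)%:E)%E})
  (nu_F : {ae m, forall x,
      ((2^-1)%:E <= nu x [set t | Einf theta A x t /\ t 0%N \in F])%E}) :
  forall (D : seq nat) (n : nat), exists2 beta : R, 0 < beta &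
    {ae m, forall x, forall k : nat, (k <= n)%N ->
       forall w : seq nat, Dwords theta A D x k w ->
       (beta%:E <= nu x (cyl theta A x w))%E}.
Proof.
move=> D n.
have Hc0 : forall e : nat, exists cc : R, 0 < cc /\ {ae m, forall x, forall t,
    Einf theta A x t -> t 0%N = e -> cc <= expR (phi x t)}.
  move=> e; have [cc [C [/andP [cc0 _] H]]] := phi_bnd e; exists cc; split => //.
  apply: filterS H => x H t Ht Ht0; by have /andP[] := H t Ht Ht0.
have [c Hc] := choice Hc0.
have cpos : forall e, 0 < c e by move=> e; case: (Hc e).
have He00 : forall a : nat, exists e0 : nat, forall e : nat, (e0 <= e)%N ->
    {ae m, forall x, forall w, Einf theta A (theta x) w -> w 0%N = e ->
      (Lpos A phi x (fun _ : Seq => 1%R) w <= (c a / 2)%:E)%E}.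
  move=> a; apply: condB; by rewrite divr_gt0.
have [e0 He0] := choice He00.
have [K HK] := lam_bnd.
have HN0 : forall ab : nat * nat, exists N : nat, forall n : nat, (N <= n)%N ->
     forall x : X, exists w : seq nat, size w = n.+1 /\
       Ewords theta A x n.+2 (ab.1 :: w ++ [:: ab.2]) := fun ab => mixing ab.1 ab.2.
have [Nf HN] := choice HN0.
have Hsf0 : forall za : X * nat, exists b : nat, A za.1 za.2 b.
  case=> z a; have [N HN'] := mixing a a.
  have [w [sw [_ Hw]]] := HN' N (leqnn N) z.
  by exists (nth 0%N (w ++ [:: a]) 0); exact: (Hw 0%N isT).
have [sf0 Hsf] := choice Hsf0.
pose sf := fun z a => sf0 (z, a).
have Hsf' : forall z a, A z a (sf z a) by move=> z a; exact: (Hsf (z, a)).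
pose Good := fun y : X =>
  [/\ (forall g : Seq -> R,
      bounded_on (Einf theta A y) g -> cont_on (Einf theta A y) g ->
      (\int[nu (theta y)]_(w in Einf theta A (theta y))
          (Lop A phi y g w)%:E
        = (lam y)%:E * \int[nu y]_(w in Einf theta A y) (g w)%:E)%E),
   (forall e t, Einf theta A y t -> t 0%N = e -> c e <= expR (phi y t)),
   (forall a e, (e0 a <= e)%N -> forall w, Einf theta A (theta y) w -> w 0%N = e ->
      (Lpos A phi y (fun _ : Seq => 1%R) w <= (c a / 2)%:E)%E),
   `|ln (lam y)| <= K &
   ((2^-1)%:E <= nu y [set t | Einf theta A y t /\ t 0%N \in F])%E].
have HG : {ae m, forall x, forall j, Good (iter j theta x)}.
  apply: ae_iter => //.
  have H2 : {ae m, forall x, forall e t, Einf theta A x t -> t 0%N = e ->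
      c e <= expR (phi x t)}.
    by apply: ae_foralln => e; case: (Hc e).
  have H3 : {ae m, forall x, forall a e, (e0 a <= e)%N -> forall w,
      Einf theta A (theta x) w -> w 0%N = e ->
      (Lpos A phi x (fun _ : Seq => 1%R) w <= (c a / 2)%:E)%E}.
    apply: ae_foralln => a; apply: ae_foralln => e.
    case: (leqP (e0 a) e) => H.
      by apply: filterS (He0 a e H) => x Hx _.
    by apply: aeW => x.
  apply: filterS (filterI conformal (filterI H2 (filterI H3 (filterI HK nu_F)))).
  by move=> x [? [? [? [? ?]]]]; split.
have LB : forall y, Good y -> forall a e, A y a e -> (e < e0 a)%N.
  move=> y [_ Hphi HB _ _] a e Aae; rewrite ltnNge; apply/negP => Hle.
  pose tau : Seq := oseq sf theta (theta y) e.
  have Ht : Einf theta A (theta y) tau by apply: oseq_Einf.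
  have t0 : tau 0%N = e by [].
  have H1 := HB a e Hle tau Ht t0.
  have H2 := Lpos_ge A phi y a tau.
  rewrite t0 Aae mul1r in H2.
  have Ae : A y a (tau 0%N) by rewrite t0.
  have H3 := Hphi a (econs a tau) (@econs_Einf _ _ theta A y a tau Ht Ae) erefl.
  have H4 := le_trans H2 H1; rewrite lee_fin in H4.
  have H5 := le_trans H3 H4.
  have := cpos a; lra.
pose M := \max_(a <- D) \max_(f <- F) Nf (a, f).
pose B0 := (\max_(a <- D) a).+1.
pose Bf := Bseq e0 B0 M.+2.
pose cm := cminf c Bf.
pose L := expR `|K|.
pose r := cm / L.
have cm0 : 0 < cm by apply: cminf_gt0.
have cm1 : cm <= 1 by apply: cminf_le1.
have L1 : 1 <= L.
  apply: le_trans (expR_ge1Dx _); rewrite lerDl; exact: normr_ge0.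
have L0 : 0 < L by apply: lt_le_trans L1.
have r0 : 0 < r by apply: divr_gt0.
have r1 : r <= 1 by rewrite /r ler_pdivrMr // mul1r; apply: le_trans L1.
have rL : r * L = cm by rewrite /r divfK // gt_eqF.
exists (r ^+ (n + M.+2) / 2).
  by apply: divr_gt0 => //; apply: exprn_gt0.
apply: filterS HG => x HGx k kn w [Hw Hall].
have HGC : forall j, GoodC theta A phi nu lam L c (iter j theta x).
  move=> j; have [H1 H2 _ H4 _] := HGx j; split => //.
  have lp : 0 < lam (iter j theta x) := lam_gt0 _.
  rewrite -(lnK lp) /L ler_expR.
  apply: le_trans (ler_norm _) _; apply: le_trans H4 _; exact: ler_norm.
have sw : size w = k.+1 by case: Hw.
pose a := nth 0%N w k.
move/(all_nthP 0%N): Hall => HallD.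
have aD : a \in D by apply: HallD; rewrite sw.
have Hwf0 : forall f : nat, exists v : seq nat, size v = M.+1 /\
   (f \in F -> Ewords theta A (iter k theta x) M.+2 (a :: v ++ [:: f])).
  move=> f; case fF : (f \in F); last by exists (nseq M.+1 0%N); rewrite size_nseq.
  have NM : (Nf (a, f) <= M)%N.
    apply: leq_trans (@leq_bigmax_seq _ F xpredT (fun f => Nf (a, f)) f fF isT) _.
    exact: (@leq_bigmax_seq _ D xpredT (fun a => \max_(f <- F) Nf (a, f)) a aD isT).
  have [v [sv Hv]] := HN (a, f) M NM (iter k theta x).
  by exists v.
have [wf Hwf] := choice Hwf0.
pose W f := w ++ (wf f ++ [:: f]).
have HWe : forall f, f \in F -> Ewords theta A x (k + M.+2) (W f).
  move=> f fF; apply: Ewords_cat Hw _; exact: (Hwf f).2.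
have letD : forall e, e \in D -> (e < Bf)%N.
  have HB0 : (B0 <= Bf)%N by exact: (Bseq_mono e0 B0 0 M.+2 isT).
  move=> e eD; apply: leq_trans HB0.
  by rewrite ltnS; exact: (@leq_bigmax_seq _ D xpredT (fun a => a) e eD isT).
have HWall : forall f, f \in F -> all (fun e => e < Bf)%N (W f).
  move=> f fF; rewrite all_cat; apply/andP; split.
    by apply/allP => e ew; apply: letD; move/allP: (introT (all_nthP 0%N) HallD); apply.
  have Hb : forall j' a' e', A (iter j' theta (iter k theta x)) a' e' -> (e' < e0 a')%N.
    move=> j' a' e' He'; apply: (LB _ (HGx (j' + k)%N)); by rewrite iterD.
  have H0 : (nth 0%N (a :: wf f ++ [:: f]) 0 < Bseq e0 B0 0)%N.
    by rewrite /= ltnS; exact: (@leq_bigmax_seq _ D xpredT (fun a => a) a aD isT).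
  have Hp := @path_bound _ _ theta A e0 B0 (iter k theta x) M.+2 _ Hb ((Hwf f).2 fF) H0.
  have Hp' : forall j, (j <= M.+2)%N -> (nth 0%N (a :: wf f ++ [:: f]) j < Bf)%N.
    move=> j jM; apply: leq_trans (Bseq_mono e0 B0 _ _ jM); exact: Hp.
  apply/(all_nthP 0%N) => j jlt; apply: (Hp' j.+1).
  by move: jlt; rewrite size_cat /= (Hwf f).1 addn1.
pose y := iter (k + M.+2) theta x.
have HB' : forall e, (e < Bf)%N -> r * L <= c e by move=> e eB; rewrite rL; exact: cminf_le.
have Hch : forall f, f \in F ->
   ((r ^+ (k + M.+2))%:E * nu y (cyl theta A y [:: f]) <= nu x (cyl theta A x (W f)))%E.
  move=> f fF; case Ew : w sw => [//|w0 w'] [sw'].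
  have sizeu : size (w' ++ wf f ++ [:: f]) = (k + M.+2)%N.
    by rewrite !size_cat sw' (Hwf f).1 /= addn1.
  have HW : W f = w0 :: (w' ++ wf f ++ [:: f]) by rewrite /W Ew.
  have Hl : last w0 (w' ++ wf f ++ [:: f]) = f by rewrite catA last_cat.
  have := @chain _ _ _ theta A phi nu lam L r Bf c (ltW r0) (ltW L0) HB'
     (w' ++ wf f ++ [:: f]) w0 x HGC.
  rewrite sizeu Hl -HW; apply; [exact: HWe | exact: HWall].
have nthW : forall f, nth 0%N (W f) (k + M.+2) = f /\ (k + M.+2 < size (W f))%N.
  move=> f; rewrite /W nth_cat size_cat sw /= size_cat (Hwf f).1 /=.
  have -> : (k + M.+2 < k.+1)%N = false by apply/negbTE; rewrite -leqNgt; lia.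
  have -> : (k + M.+2 - k.+1)%N = M.+1 by lia.
  rewrite nth_cat (Hwf f).1 ltnn subnn /=; split => //; lia.
have sub1 : \big[setU/set0]_(f <- undup F) cyl theta A x (W f) `<=` cyl theta A x w.
  move=> t Ht; have [f _ Hf] := bigU_mem _ _ _ Ht; exact: cyl_cat Hf.
have disj1 : forall i j, i != j -> cyl theta A x (W i) `&` cyl theta A x (W j) = set0.
  move=> i j ij; apply/seteqP; split => // t [[_ Hi] [_ Hj]].
  have [ni si] := nthW i; have [nj sj] := nthW j.
  have := Hi _ si; rewrite ni (Hj _ sj) nj => eij; by rewrite eij eqxx in ij.
have disj2 : forall i j, i != j -> cyl theta A y [:: i] `&` cyl theta A y [:: j] = set0.
  move=> i j ij; apply/seteqP; split => // t [[_ Hi] [_ Hj]].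
  have := Hi 0%N isT; rewrite (Hj 0%N isT) /= => eij; by rewrite eij eqxx in ij.
have eqF : \big[setU/set0]_(f <- undup F) cyl theta A y [:: f] =
    [set t | Einf theta A y t /\ t 0%N \in F].
  apply/seteqP; split => t.
    move=> Ht; have [f fF [Ht1 Hf]] := bigU_mem _ _ _ Ht; split => //.
    by rewrite (Hf 0%N isT) /= -mem_undup.
  move=> [Ht1 Ht2]; apply: (@bigU_in _ _ _ (t 0%N)); first by rewrite mem_undup.
  by split => // -[|i] //.
have S1 : (nu x (\big[setU/set0]_(f <- undup F) cyl theta A x (W f))
     <= nu x (cyl theta A x w))%E.
  apply: (le_measure _ (mem_set _) (mem_set _) sub1); last exact: meas_cyl.
  by apply: bigsetU_measurable => f _; exact: meas_cyl.
have S2 : (\sum_(f <- undup F) nu x (cyl theta A x (W f)) =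
    nu x (\big[setU/set0]_(f <- undup F) cyl theta A x (W f)))%E.
  apply: sum_disj => //; [exact: undup_uniq | move=> f; exact: meas_cyl].
have S3 : (\sum_(f <- undup F) ((r ^+ (k + M.+2))%:E * nu y (cyl theta A y [:: f]))
    <= \sum_(f <- undup F) nu x (cyl theta A x (W f)))%E.
  rewrite big_seq [X in (_ <= X)%E]big_seq; apply: lee_sum => f.
  rewrite mem_undup; exact: Hch.
have S4 : (\sum_(f <- undup F) ((r ^+ (k + M.+2))%:E * nu y (cyl theta A y [:: f]))
    = (r ^+ (k + M.+2))%:E * nu y [set t | Einf theta A y t /\ t 0%N \in F])%E.
  rewrite -ge0_sume_distrr; last by move=> f _; exact: measure_ge0.
  rewrite sum_disj //; [by rewrite eqF | exact: undup_uniq | move=> f; exact: meas_cyl].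
have [_ _ _ _ S5] := HGx (k + M.+2)%N.
rewrite -/y in S5.
apply: le_trans S1; rewrite -S2; apply: le_trans S3; rewrite S4.
apply: le_trans (lee_wpmul2l _ S5); last by rewrite lee_fin; apply: exprn_ge0; apply: ltW.
rewrite -EFinM lee_fin ler_pM2r ?invr_gt0 //.
by apply: ler_wiXn2l; [apply: ltW | |rewrite leq_add2r].
Qed.
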